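(* Let $u_0\in H^2(\mathbb{R}_+)$ and let $$u(t,x)=\frac{1}{\sqrt{4\pi t}}\int_0^\infty u_0(y)\left[e^{-\frac{(x-y+t)^2}{4t}}-e^{-x}e^{-\frac{(x+y-t)^2}{4t}}\right]dy,$$ which is a solution $u\in C(\mathbb{R}_+,H^2(\mathbb{R}_+))$ of the boundary-value problem $u_t=u_x+u_{xx}$ for $x>0$, $u(t,0)=0$, $u(t,x)\to0$ as $x\to+\infty$, with $u(0,x)=u_0(x)$. Then $$\|u(t,\cdot)\|_{W^{2,\infty}(\mathbb{R}_+)}\to0\quad\text{as } t\to\infty.$$
   Context: $\mathbb{R}_+=(0,\infty)$. *)

(* Defs.v *)
From HB Require Import structures.
From mathcomp Require Import all_boot all_order all_algebra.
From mathcomp Require Import all_classical all_reals all_analysis.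
Set Implicit Arguments. Unset Strict Implicit. Unset Printing Implicit Defensive.
Import Order.TTheory GRing.Theory Num.Theory.
Import numFieldNormedType.Exports.
Local Open Scope classical_set_scope.
Local Open Scope ring_scope.

Section Defs.
Variable R : realType.

Definition Rpos : set R := `]0, +oo[%classic.

Local Notation mu := (@lebesgue_measure R).

Definition L2pos (f : R -> R) : Prop :=
  measurable_fun Rpos f /\ (\int[mu]_(x in Rpos) ((f x) ^+ 2)%:E < +oo)%E.

Definition test_fun_pos (phi : R -> R) : Prop :=
  (forall (n : nat) (x : R), derivable (derive1n n phi) x 1) /\
  exists a b : R, 0 < a /\ a <= b /\
    (forall x, ~ (a <= x <= b) -> phi x = 0).

Definition weak_deriv_pos (f g : R -> R) : Prop :=
  forall phi, test_fun_pos phi ->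
    Rintegral mu Rpos (fun x => f x * derive1 phi x) =
    - Rintegral mu Rpos (fun x => g x * phi x).

Definition H2pos (u0 : R -> R) : Prop :=
  exists g1 g2 : R -> R,
    [/\ L2pos u0, L2pos g1, L2pos g2, weak_deriv_pos u0 g1 & weak_deriv_pos g1 g2].

Definition heat_sol (u0 : R -> R) (t x : R) : R :=
  (Num.sqrt (4 * pi * t))^-1 *
  Rintegral mu Rpos (fun y => u0 y *
     (expR (- ((x - y + t) ^+ 2) / (4 * t)) -
      expR (- x) * expR (- ((x + y - t) ^+ 2) / (4 * t)))).

Definition supnorm_pos (f : R -> R) : \bar R :=
  ereal_sup [set (`|f x|)%:E | x in Rpos].

Definition W2inf_norm_pos (f : R -> R) : \bar R :=
  (supnorm_pos f + supnorm_pos (derive1 f) + supnorm_pos (derive1 (derive1 f)))%E.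

End Defs.

(* Main.v *)
Require Import Defs.
From HB Require Import structures.
From mathcomp Require Import all_boot all_order all_algebra.
From mathcomp Require Import all_classical all_reals all_analysis.
From mathcomp Require Import ring lra.
From mathcomp Require Import measurable_realfun.
Set Implicit Arguments. Unset Strict Implicit. Unset Printing Implicit Defensive.
Import Order.TTheory GRing.Theory Num.Theory.
Import numFieldNormedType.Exports.
Local Open Scope classical_set_scope.
Local Open Scope ring_scope.
Section Aux.
Variable R : realType.
Local Notation mu := (@lebesgue_measure R).

Definition gs (v m y : R) := expR (- (y - m) ^+ 2 / v).
Definition ga (t z : R) := expR (- z ^+ 2 / (4 * t)).
Definition ga1 (t z : R) := - (z / (2 * t)) * ga t z.
Definition ga2 (t z : R) := (z ^+ 2 / (4 * t ^+ 2) - (2 * t)^-1) * ga t z.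

Lemma is_derive_expR_comp (f : R -> R) (x df : R) : is_derive x (1:R) f df ->
  is_derive x (1:R) (fun y => expR (f y)) (expR (f x) * df).
Proof.
move=> [fd fv].
have dexp : derivable expR (f x) 1 by exact: derivable_expR.
have dc : derivable (expR \o f) x 1.
  apply/derivable1_diffP; apply: differentiable_comp; exact/derivable1_diffP.
apply: DeriveDef; first exact: dc.
rewrite -derive1E.
have := derive1_comp fd dexp. rewrite /comp => ->.
by rewrite !derive1E fv derive_val.
Qed.

Lemma is_derive_mulc (f : R -> R) (x df c : R) : is_derive x (1:R) f df ->
  is_derive x (1:R) (fun y => c * f y) (c * df).
Proof. move=> h; exact: (is_deriveZ c h). Qed.

Lemma is_derive_mul (f g : R -> R) (x df dg : R) : is_derive x (1:R) f df ->
  is_derive x (1:R) g dg ->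
  is_derive x (1:R) (fun y => f y * g y) (f x * dg + g x * df).
Proof. move=> h1 h2; exact: (is_deriveM h1 h2). Qed.

Lemma is_derive_sub (f g : R -> R) (x df dg : R) : is_derive x (1:R) f df ->
  is_derive x (1:R) g dg ->
  is_derive x (1:R) (fun y => f y - g y) (df - dg).
Proof. move=> h1 h2; exact: (is_deriveB h1 h2). Qed.

Lemma is_derive_add (f g : R -> R) (x df dg : R) : is_derive x (1:R) f df ->
  is_derive x (1:R) g dg ->
  is_derive x (1:R) (fun y => f y + g y) (df + dg).
Proof. move=> h1 h2; exact: (is_deriveD h1 h2). Qed.

Lemma der_ga t c x : 0 < t -> is_derive x (1:R) (fun y => ga t (y + c)) (ga1 t (x + c)).
Proof.
move=> t0.
have h : is_derive x (1:R) (fun y => - (y + c) ^+ 2 / (4 * t)) (- (2 * (x + c)) / (4 * t)).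
  apply: is_derive_eq.
  rewrite scaler0 add0r addr0 -[_ *: _]/(_ * _) -[(x + c) *: 1]/((x+c) * 1).
  ring.
have h2 := is_derive_expR_comp h.
rewrite /ga1 {1}/ga; apply: (is_derive_eq h2).
rewrite /ga; field; exact: lt0r_neq0.
Qed.

Lemma der_lin (a b x : R) : is_derive x (1:R) (fun y => a * y + b) a.
Proof.
have h := is_derive_add (is_derive_mulc a (@is_derive_id _ R^o x 1)) (@is_derive_cst _ R^o R^o b x 1).
apply: is_derive_eq h _; rewrite mulr1 addr0 //.
Qed.

Lemma der_ga1 t c x : 0 < t -> is_derive x (1:R) (fun y => ga1 t (y + c)) (ga2 t (x + c)).
Proof.
move=> t0.
have h1 : is_derive x (1:R) (fun y => - ((2 * t)^-1) * y + (- (c / (2 * t)))) (- ((2 * t)^-1)).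
  exact: der_lin.
have := is_derive_mul h1 (der_ga c x t0).
move=> h.
have -> : (fun y => ga1 t (y + c)) = (fun y => (- ((2 * t)^-1) * y + (- (c / (2 * t)))) * ga t (y + c)).
  apply: boolp.funext => y; rewrite /ga1; congr (_ * _); ring.
apply: is_derive_eq h _.
rewrite /ga2 /ga1; field; exact: lt0r_neq0.
Qed.

Lemma der_expN x : is_derive x (1:R) (fun y => expR (- y)) (- expR (- x)).
Proof.
have h : is_derive x (1:R) (fun y => (-1) * y + 0) (-1) by exact: der_lin.
have h2 := is_derive_expR_comp h.
have -> : (fun y : R => expR (- y)) = (fun y : R => expR ((-1) * y + 0)).
  by apply: boolp.funext => y; rewrite mulN1r addr0.
apply: (is_derive_eq h2).
by rewrite mulrN1 mulN1r addr0.
Qed.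

End Aux.
Section Ker.
Variable R : realType.

Definition k0 (t x y : R) := ga t (x + (t - y)) - expR (- x) * ga t (x + (y - t)).
Definition k1 (t x y : R) := ga1 t (x + (t - y)) -
  expR (- x) * (ga1 t (x + (y - t)) - ga t (x + (y - t))).
Definition k2 (t x y : R) := ga2 t (x + (t - y)) -
  expR (- x) * (ga2 t (x + (y - t)) - 2 * ga1 t (x + (y - t)) + ga t (x + (y - t))).

Lemma der_k0 t y x : 0 < t -> is_derive x (1:R) (fun x => k0 t x y) (k1 t x y).
Proof.
move=> t0.
have h1 := der_ga (t - y) x t0.
have h2 := der_ga (y - t) x t0.
have h3 := is_derive_mul (der_expN x) h2.
have h := is_derive_sub h1 h3.
apply: (is_derive_eq h); rewrite /k1; ring.
Qed.

Lemma der_k1 t y x : 0 < t -> is_derive x (1:R) (fun x => k1 t x y) (k2 t x y).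
Proof.
move=> t0.
have h1 := der_ga1 (t - y) x t0.
have h2 := is_derive_sub (der_ga1 (y - t) x t0) (der_ga (y - t) x t0).
have h3 := is_derive_mul (der_expN x) h2.
have h := is_derive_sub h1 h3.
apply: (is_derive_eq h); rewrite /k2; ring.
Qed.

Lemma wexp (w : R) : 0 <= w -> w * expR (- w) <= 1.
Proof.
move=> w0; rewrite expRN -/(w / expR w) ler_pdivrMr ?expR_gt0// mul1r.
by have := expR_ge1Dx w; lra.
Qed.

Lemma gs_ge0 v m y : 0 <= gs v m y :> R.
Proof. exact: expR_ge0. Qed.

Lemma gs_le1 v m y : 0 < v -> gs v m y <= 1 :> R.
Proof.
move=> v0; rewrite /gs expR_le1 mulNr oppr_le0 divr_ge0 ?sqr_ge0//; exact: ltW.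
Qed.

Lemma ga_gs t z : 0 < t -> ga t z = gs (8 * t) 0 z * gs (8 * t) 0 z :> R.
Proof.
move=> t0; rewrite /ga /gs subr0 -expRD; congr expR; field; exact: lt0r_neq0.
Qed.

Lemma ga_ge0 t z : 0 <= ga t z :> R.
Proof. exact: expR_ge0. Qed.

Lemma sq_ga t z : 0 < t -> z ^+ 2 * ga t z <= 8 * t * gs (8 * t) 0 z :> R.
Proof.
move=> t0; rewrite ga_gs//.
set w := z ^+ 2 / (8 * t).
have w0 : 0 <= w by rewrite divr_ge0 ?sqr_ge0// mulr_ge0// ltW.
have e : gs (8 * t) 0 z = expR (- w) by rewrite /gs subr0 mulNr.
have zw : z ^+ 2 = 8 * t * w by rewrite /w mulrC divfK// mulf_neq0// lt0r_neq0.
rewrite e zw.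
have := wexp w0; have := expR_ge0 (- w).
move: (expR (- w)) => E E0 wE.
have t80 : 0 <= 8 * t by rewrite mulr_ge0// ltW.
move: (8 * t) t80 => T T0.
have -> : T * w * (E * E) = T * E * (w * E) by ring.
by rewrite -[leRHS]mulr1 ler_wpM2l// mulr_ge0.
Qed.

Lemma ga_le t z : 0 < t -> ga t z <= gs (8 * t) 0 z :> R.
Proof.
move=> t0; rewrite ga_gs//.
by rewrite -[leRHS]mulr1 ler_wpM2l ?gs_ge0// gs_le1// mulr_gt0.
Qed.

Lemma ga1_le t z : 0 < t -> `|ga1 t z| <= (1 + 3 / t) * gs (8 * t) 0 z :> R.
Proof.
move=> t0.
have tn0 : t != 0 by exact: lt0r_neq0.
set G := gs (8 * t) 0 z.
have gG : ga t z <= G := ga_le z t0.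
have Zl : z ^+ 2 * ga t z <= 8 * t * G := sq_ga z t0.
have g0 := ga_ge0 t z.
set u := `|z| / (2 * t).
have u0 : 0 <= u by rewrite divr_ge0// mulr_ge0// ltW.
have -> : `|ga1 t z| = u * ga t z.
  rewrite /ga1 normrM normrN (ger0_norm g0) normrM normfV [`|2 * t|]ger0_norm//.
  by rewrite mulr_ge0// ltW.
have s1 : u * ga t z <= (1 + u ^+ 2) / 2 * ga t z.
  apply: ler_wpM2r => //.
  have : 0 <= (u - 1) ^+ 2 by exact: sqr_ge0.
  lra.
apply: (le_trans s1).
have -> : (1 + u ^+ 2) / 2 * ga t z = ga t z / 2 + (z ^+ 2 * ga t z) * (8 * t ^+ 2)^-1.
  rewrite /u exprMn real_normK ?num_real//; field; exact: tn0.
have s3 : (z ^+ 2 * ga t z) * (8 * t ^+ 2)^-1 <= (8 * t * G) * (8 * t ^+ 2)^-1.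
  by apply: ler_wpM2r => //; rewrite invr_ge0 mulr_ge0// sqr_ge0.
have e3 : (8 * t * G) * (8 * t ^+ 2)^-1 = G / t by field.
rewrite e3 in s3.
have -> : (1 + 3 / t) * G = G + 3 * (G / t) by field.
have : 0 <= G / t by rewrite divr_ge0 ?gs_ge0// ltW.
lra.
Qed.

Lemma ga2_le t z : 0 < t -> `|ga2 t z| <= (1 + 3 / t) * gs (8 * t) 0 z :> R.
Proof.
move=> t0.
have tn0 : t != 0 by exact: lt0r_neq0.
set G := gs (8 * t) 0 z.
have gG : ga t z <= G := ga_le z t0.
have Zl : z ^+ 2 * ga t z <= 8 * t * G := sq_ga z t0.
have g0 := ga_ge0 t z.
have a0 : 0 <= z ^+ 2 / (4 * t ^+ 2) by rewrite divr_ge0 ?sqr_ge0// mulr_ge0// sqr_ge0.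
have b0 : 0 <= (2 * t)^-1 by rewrite invr_ge0 mulr_ge0// ltW.
have s1 : `|ga2 t z| <= (z ^+ 2 / (4 * t ^+ 2) + (2 * t)^-1) * ga t z.
  rewrite /ga2 normrM (ger0_norm g0) ler_wpM2r//.
  by apply: (le_trans (ler_normB _ _)); rewrite !ger0_norm.
apply: (le_trans s1).
have -> : (z ^+ 2 / (4 * t ^+ 2) + (2 * t)^-1) * ga t z =
   (z ^+ 2 * ga t z) * (4 * t ^+ 2)^-1 + ga t z * (2 * t)^-1.
  by field.
have s3 : (z ^+ 2 * ga t z) * (4 * t ^+ 2)^-1 <= (8 * t * G) * (4 * t ^+ 2)^-1.
  by apply: ler_wpM2r => //; rewrite invr_ge0 mulr_ge0// sqr_ge0.
have s4 : ga t z * (2 * t)^-1 <= G * (2 * t)^-1 by apply: ler_wpM2r.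
have e3 : (8 * t * G) * (4 * t ^+ 2)^-1 = 2 * (G / t) by field.
have e4 : G * (2 * t)^-1 = (G / t) / 2 by field.
rewrite e3 in s3; rewrite e4 in s4.
have -> : (1 + 3 / t) * G = G + 3 * (G / t) by field.
have : 0 <= G / t by rewrite divr_ge0 ?gs_ge0// ltW.
have : 0 <= G by exact: gs_ge0.
lra.
Qed.

End Ker.
Section KerBound.
Variable R : realType.

Definition Bt (t : R) := 1 + 3 / t.

Lemma Bt_ge1 t : 0 < t -> 1 <= Bt t.
Proof. by move=> t0; rewrite /Bt lerDl divr_ge0// ltW. Qed.

Lemma gs_sh1 v x t y : gs v 0 (x + (t - y)) = gs v (x + t) y :> R.
Proof. rewrite /gs subr0 (_ : x + (t - y) = - (y - (x + t))) ?sqrrN//; ring. Qed.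

Lemma gs_sh2 v x t y : gs v 0 (x + (y - t)) = gs v (t - x) y :> R.
Proof. rewrite /gs subr0 (_ : x + (y - t) = y - (t - x))//; ring. Qed.

Lemma ga_leB t z : 0 < t -> `|ga t z| <= Bt t * gs (8 * t) 0 z :> R.
Proof.
move=> t0; rewrite ger0_norm ?ga_ge0//; apply: (le_trans (ga_le z t0)).
by rewrite ler_peMl ?gs_ge0// Bt_ge1.
Qed.

Lemma tri3 (b c d : R) : `|b - 2 * c + d| <= `|b| + 2 * `|c| + `|d|.
Proof.
apply: (le_trans (ler_normD _ _)); apply: lerD => //.
apply: (le_trans (ler_normB _ _)); rewrite normrM ger0_norm//.
Qed.

Lemma tri2 (b d : R) : `|b - d| <= `|b| + `|d|.
Proof. exact: ler_normB. Qed.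

Definition kbd (t x y : R) := 4 * Bt t * (gs (8 * t) (x + t) y + expR (- x) * gs (8 * t) (t - x) y).

Lemma k0_bd t x y : 0 < t -> `|k0 t x y| <= kbd t x y.
Proof.
move=> t0; rewrite /k0 /kbd -gs_sh1 -gs_sh2.
set P := expR (- x).
have P0 : 0 <= P := expR_ge0 _.
set G1 := gs (8 * t) 0 (x + (t - y)); set G2 := gs (8 * t) 0 (x + (y - t)).
have h1 : `|ga t (x + (t - y))| <= Bt t * G1 := ga_leB _ t0.
have h2 : `|ga t (x + (y - t))| <= Bt t * G2 := ga_leB _ t0.
have B1 := Bt_ge1 t0.
have g10 : 0 <= G1 := gs_ge0 _ _ _.
have g20 : 0 <= G2 := gs_ge0 _ _ _.
apply: (le_trans (tri2 _ _)); rewrite (normrM P) [`|P|]ger0_norm//.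
have h3 : P * `|ga t (x + (y - t))| <= P * (Bt t * G2) by rewrite ler_wpM2l.
have -> : 4 * Bt t * (G1 + P * G2) = 4 * (Bt t * G1) + 4 * (P * (Bt t * G2)) by ring.
have : 0 <= Bt t * G1 by rewrite mulr_ge0// (le_trans _ B1).
have : 0 <= P * (Bt t * G2) by rewrite !mulr_ge0// (le_trans _ B1).
lra.
Qed.

Lemma k1_bd t x y : 0 < t -> `|k1 t x y| <= kbd t x y.
Proof.
move=> t0; rewrite /k1 /kbd -gs_sh1 -gs_sh2.
set P := expR (- x).
have P0 : 0 <= P := expR_ge0 _.
set G1 := gs (8 * t) 0 (x + (t - y)); set G2 := gs (8 * t) 0 (x + (y - t)).
have h1 : `|ga1 t (x + (t - y))| <= Bt t * G1 := ga1_le _ t0.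
have h2 : `|ga t (x + (y - t))| <= Bt t * G2 := ga_leB _ t0.
have h2' : `|ga1 t (x + (y - t))| <= Bt t * G2 := ga1_le _ t0.
have B1 := Bt_ge1 t0.
have g10 : 0 <= G1 := gs_ge0 _ _ _.
have g20 : 0 <= G2 := gs_ge0 _ _ _.
apply: (le_trans (tri2 _ _)); rewrite (normrM P) [`|P|]ger0_norm//.
have h3 : P * `|ga1 t (x + (y - t)) - ga t (x + (y - t))| <= P * (2 * (Bt t * G2)).
  rewrite ler_wpM2l//; apply: (le_trans (tri2 _ _)); lra.
have -> : 4 * Bt t * (G1 + P * G2) = 4 * (Bt t * G1) + 2 * (P * (2 * (Bt t * G2))) by ring.
have : 0 <= Bt t * G1 by rewrite mulr_ge0// (le_trans _ B1).
have : 0 <= P * (2 * (Bt t * G2)) by rewrite !mulr_ge0// (le_trans _ B1).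
lra.
Qed.

Lemma k2_bd t x y : 0 < t -> `|k2 t x y| <= kbd t x y.
Proof.
move=> t0; rewrite /k2 /kbd -gs_sh1 -gs_sh2.
set P := expR (- x).
have P0 : 0 <= P := expR_ge0 _.
set G1 := gs (8 * t) 0 (x + (t - y)); set G2 := gs (8 * t) 0 (x + (y - t)).
have h1 : `|ga2 t (x + (t - y))| <= Bt t * G1 := ga2_le _ t0.
have h2 : `|ga t (x + (y - t))| <= Bt t * G2 := ga_leB _ t0.
have h2' : `|ga1 t (x + (y - t))| <= Bt t * G2 := ga1_le _ t0.
have h2'' : `|ga2 t (x + (y - t))| <= Bt t * G2 := ga2_le _ t0.
have B1 := Bt_ge1 t0.
have g10 : 0 <= G1 := gs_ge0 _ _ _.
have g20 : 0 <= G2 := gs_ge0 _ _ _.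
apply: (le_trans (tri2 _ _)); rewrite (normrM P) [`|P|]ger0_norm//.
have h3 : P * `|ga2 t (x + (y - t)) - 2 * ga1 t (x + (y - t)) + ga t (x + (y - t))|
   <= P * (4 * (Bt t * G2)).
  rewrite ler_wpM2l//; apply: (le_trans (tri3 _ _ _)); lra.
have -> : 4 * Bt t * (G1 + P * G2) = 4 * (Bt t * G1) + (P * (4 * (Bt t * G2))) by ring.
have : 0 <= Bt t * G1 by rewrite mulr_ge0// (le_trans _ B1).
lra.
Qed.

End KerBound.
Section Gauss.
Variable R : realType.
Local Notation mu := (@lebesgue_measure R).
Local Notation Rp := (@Rpos R).

Lemma mRpos : measurable (@Rpos R).
Proof. exact: measurable_itv. Qed.

Lemma gs_normal (v m : R) : 0 < v -> gs v m = normal_fun m (Num.sqrt (v / 2)).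
Proof.
move=> v0; apply: boolp.funext => y; rewrite /gs /normal_fun sqr_sqrtr; last first.
  by rewrite divr_ge0// ltW.
by rewrite -mulr_natr divfK// pnatr_eq0.
Qed.

Lemma measurable_gs (v m : R) (D : set R) : measurable_fun D (gs v m).
Proof.
apply: measurableT_comp => //; apply: measurable_funM => //.
apply: measurableT_comp => //; apply: measurable_funX => //.
exact: measurable_funB.
Qed.

Lemma gs_int_setT (v m : R) : 0 < v ->
  mu.-integrable setT (EFin \o gs v m) /\
  (\int[mu]_x (gs v m x)%:E = (Num.sqrt (pi * v))%:E)%E.
Proof.
move=> v0.
set s := Num.sqrt (v / 2).
have s0 : s != 0 by rewrite /s sqrtr_eq0 -ltNge divr_gt0.
have hp := normal_peak_gt0 s0.
have e : EFin \o gs v m = (fun x => ((normal_peak s)^-1)%:E * (normal_pdf m s x)%:E)%E.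
  apply: boolp.funext => x; rewrite /= normal_pdfE// -EFinM mulrA mulVf ?gt_eqF// mul1r.
  by rewrite gs_normal.
split.
  by rewrite e; apply: integrableZl => //; exact: integrable_normal_pdf.
rewrite -[X in (\int[mu]_x X x)%E]/((EFin \o gs v m)) e integralZl//; last first.
  exact: integrable_normal_pdf.
rewrite integral_normal_pdf mule1 /normal_peak invrK.
congr (EFin (Num.sqrt _)).
rewrite /s sqr_sqrtr ?divr_ge0 ?ltW// -mulr_natr.
by field.
Qed.

Lemma gs_int (v m : R) : 0 < v ->
  mu.-integrable Rp (EFin \o gs v m) /\
  \int[mu]_(x in Rp) gs v m x <= Num.sqrt (pi * v).
Proof.
move=> v0; have [hi hv] := gs_int_setT m v0.
have hs : mu.-integrable Rp (EFin \o gs v m).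
  by apply: integrableS hi => //; exact: mRpos.
split => //.
have le1 : (\int[mu]_(x in Rp) (gs v m x)%:E <= \int[mu]_x (gs v m x)%:E)%E.
  apply: ge0_subset_integral => //; first exact: mRpos.
  - by apply/measurable_EFinP; exact: measurable_gs.
  - by move=> x _; rewrite lee_fin gs_ge0.
rewrite hv in le1.
have fin : (\int[mu]_(x in Rp) (gs v m x)%:E)%E \is a fin_num.
  rewrite ge0_fin_numE; first by apply: (le_lt_trans le1); exact: ltry.
  by apply: integral_ge0 => x _; rewrite lee_fin gs_ge0.
by rewrite /Rintegral -lee_fin fineK.
Qed.

Lemma gs_sq (v m y : R) : 0 < v -> gs v m y ^+ 2 = gs (v / 2) m y.
Proof.
move=> v0; rewrite /gs expr2 -expRD; congr expR; field; exact: lt0r_neq0.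
Qed.

End Gauss.
Section L2.
Variable R : realType.
Local Notation mu := (@lebesgue_measure R).
Local Notation Rp := (@Rpos R).

Lemma intZ (f : R -> R) (k : R) :
  mu.-integrable Rp (EFin \o f) -> mu.-integrable Rp (EFin \o (fun y => k * f y)).
Proof.
move=> hf; have := @integrableZl _ _ _ mu Rp (@mRpos R) k _ hf.
suff -> : (EFin \o (fun y => k * f y)) = (fun x => (k%:E * (EFin \o f) x)%E) by [].
by apply: boolp.funext => y /=; rewrite EFinM.
Qed.

Lemma intD (f g : R -> R) :
  mu.-integrable Rp (EFin \o f) -> mu.-integrable Rp (EFin \o g) ->
  mu.-integrable Rp (EFin \o (fun y => f y + g y)).
Proof.
move=> hf hg; have := @integrableD _ _ _ mu Rp (@mRpos R) _ _ hf hg.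
suff -> : (EFin \o (fun y => f y + g y)) = ((EFin \o f) \+ (EFin \o g))%E by [].
by apply: boolp.funext => y /=; rewrite EFinD.
Qed.

Lemma amgm (a b s : R) : 0 < s -> a * b <= s / 2 * a ^+ 2 + (2 * s)^-1 * b ^+ 2.
Proof.
move=> s0; rewrite -subr_ge0.
have -> : s / 2 * a ^+ 2 + (2 * s)^-1 * b ^+ 2 - a * b = (s * a - b) ^+ 2 / (2 * s).
  by field; exact: lt0r_neq0.
by rewrite divr_ge0 ?sqr_ge0// mulr_ge0// ltW.
Qed.

Lemma sqD_le (a b : R) : (a + b) ^+ 2 <= 2 * a ^+ 2 + 2 * b ^+ 2.
Proof.
rewrite -subr_ge0.
have -> : 2 * a ^+ 2 + 2 * b ^+ 2 - (a + b) ^+ 2 = (a - b) ^+ 2 by ring.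
exact: sqr_ge0.
Qed.

Lemma L2_int2 (u0 : R -> R) : L2pos u0 ->
  mu.-integrable Rp (EFin \o (fun y => u0 y ^+ 2)).
Proof.
move=> [mu0 fin0]; apply/integrableP; split.
  by apply/measurable_EFinP; apply: measurable_funX.
under eq_integral do rewrite /= ger0_norm ?sqr_ge0//.
exact: fin0.
Qed.

Lemma L2_mul (u0 h : R -> R) al be m1 m2 v s :
  L2pos u0 -> measurable_fun Rp h -> 0 < v -> 0 <= al -> 0 <= be -> 0 < s ->
  (forall y, Rp y -> `|h y| <= al * gs v m1 y + be * gs v m2 y) ->
  mu.-integrable Rp (EFin \o (fun y => u0 y * h y)) /\
  `|\int[mu]_(y in Rp) (u0 y * h y)| <=
    s / 2 * \int[mu]_(y in Rp) (u0 y ^+ 2) +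
    (2 * s)^-1 * (2 * (al ^+ 2 + be ^+ 2) * Num.sqrt (pi * (v / 2))).
Proof.
move=> hu0 mh v0 al0 be0 s0 hb.
have [mu0 _] := hu0.
have mR := @mRpos R.
have iu2 := L2_int2 hu0.
have v20 : 0 < v / 2 by rewrite divr_gt0.
have [ig1 bg1] := gs_int m1 v20.
have [ig2 bg2] := gs_int m2 v20.
pose H y := 2 * al ^+ 2 * gs (v / 2) m1 y + 2 * be ^+ 2 * gs (v / 2) m2 y.
have iH : mu.-integrable Rp (EFin \o H).
  by apply: intD => //; apply: intZ.
have H0 y : 0 <= H y.
  by rewrite addr_ge0// mulr_ge0 ?gs_ge0// mulr_ge0// sqr_ge0.
have hH y : Rp y -> h y ^+ 2 <= H y.
  move=> Ry.
  have e1 : h y ^+ 2 = `|h y| ^+ 2 by rewrite real_normK// num_real.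
  rewrite e1; apply: (le_trans (y := (al * gs v m1 y + be * gs v m2 y) ^+ 2)).
    by rewrite !expr2; apply: ler_pM => //; exact: hb.
  apply: (le_trans (sqD_le _ _)).
  by rewrite /H !exprMn !gs_sq// !mulrA.
have ih2 : mu.-integrable Rp (EFin \o (fun y => h y ^+ 2)).
  apply: (@le_integrable _ _ _ mu Rp mR _ (EFin \o H)) => //.
    by apply/measurable_EFinP; apply: measurable_funX.
  move=> y Ry /=; rewrite lee_fin (ger0_norm (H0 y)) ger0_norm ?sqr_ge0//.
  exact: hH.
pose M y := s / 2 * u0 y ^+ 2 + (2 * s)^-1 * h y ^+ 2.
have iM : mu.-integrable Rp (EFin \o M).
  by apply: intD => //; apply: intZ.
have hM y : `|u0 y * h y| <= M y.
  rewrite normrM /M -(real_normK (num_real (u0 y))) -(real_normK (num_real (h y))).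
  exact: amgm.
have iuh : mu.-integrable Rp (EFin \o (fun y => u0 y * h y)).
  apply: (@le_integrable _ _ _ mu Rp mR _ (EFin \o M)) => //.
    by apply/measurable_EFinP; apply: measurable_funM.
  move=> y Ry /=; rewrite lee_fin; apply: (le_trans (hM y)).
  exact: ler_norm.
split => //.
apply: (le_trans (@le_normr_Rintegral _ _ _ mu Rp _ mR iuh)).
have iu2' := intZ (s / 2) iu2.
have ih2' := intZ (2 * s)^-1 ih2.
apply: (le_trans (y := \int[mu]_(y in Rp) M y)).
  apply: (@le_Rintegral _ _ _ mu Rp _ _ mR).
  - exact: (integrable_norm iuh).
  - exact: iM.
  - by move=> y _; exact: hM.
rewrite /M RintegralD; [|exact: mR|exact: iu2'|exact: ih2'].
rewrite RintegralZl; [|exact: mR|exact: iu2].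
rewrite RintegralZl; [|exact: mR|exact: ih2].
rewrite lerD2l.
apply: ler_wpM2l; first by rewrite invr_ge0 mulr_ge0// ltW.
apply: (le_trans (y := \int[mu]_(y in Rp) H y)).
  apply: (@le_Rintegral _ _ _ mu Rp _ _ mR).
  - exact: ih2.
  - exact: iH.
  - by move=> y Ry; exact: hH.
have ig1' := intZ (2 * al ^+ 2) ig1.
have ig2' := intZ (2 * be ^+ 2) ig2.
rewrite /H RintegralD; [|exact: mR|exact: ig1'|exact: ig2'].
rewrite RintegralZl; [|exact: mR|exact: ig1].
rewrite RintegralZl; [|exact: mR|exact: ig2].
have -> : 2 * (al ^+ 2 + be ^+ 2) * Num.sqrt (pi * (v / 2)) =
  2 * al ^+ 2 * Num.sqrt (pi * (v / 2)) + 2 * be ^+ 2 * Num.sqrt (pi * (v / 2)) by ring.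
by apply: lerD; apply: ler_wpM2l => //; rewrite mulr_ge0// sqr_ge0.
Qed.

End L2.
Section Step.
Variable R : realType.
Local Notation mu := (@lebesgue_measure R).
Local Notation Rp := (@Rpos R).

Lemma gs_dom (v m m' y : R) : 0 < v -> `|m - m'| <= 1 ->
  gs v m y <= expR (v^-1) * gs (2 * v) m' y.
Proof.
move=> v0 hm; rewrite /gs -expRD ler_expR.
set A := y - m; set b := m - m'.
have -> : y - m' = A + b by rewrite /A /b; ring.
rewrite -subr_ge0.
have -> : v^-1 + - (A + b) ^+ 2 / (2 * v) - - A ^+ 2 / v =
   (2 + 2 * A ^+ 2 - (A + b) ^+ 2) / (2 * v).
  by field; exact: lt0r_neq0.
apply: divr_ge0; last by rewrite mulr_ge0// ltW.
have h1 := sqD_le A b.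
have h2 : b ^+ 2 <= 1.
  rewrite -(real_normK (num_real b)) expr2.
  have := normr_ge0 b; nra.
lra.
Qed.

Lemma deriv_step (u0 : R -> R) (t : R) (kA kB : R -> R -> R) (Lc a : R) :
  L2pos u0 -> 0 < t -> 0 <= Lc ->
  (forall x, measurable_fun Rp (kA x)) ->
  (forall x y, is_derive x (1:R) (kA ^~ y) (kB x y)) ->
  (forall x y, `|kA x y| <= Lc * (gs (8 * t) (x + t) y + expR (- x) * gs (8 * t) (t - x) y)) ->
  (forall x y, `|kB x y| <= Lc * (gs (8 * t) (x + t) y + expR (- x) * gs (8 * t) (t - x) y)) ->
  is_derive a (1:R) (fun x => \int[mu]_(y in Rp) (u0 y * kA x y))
    (\int[mu]_(y in Rp) (u0 y * kB a y)).
Proof.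
move=> hu0 t0 L0 mA dA bA bB.
have mR := @mRpos R.
have v0 : 0 < 8 * t by rewrite mulr_gt0.
pose f := fun x y => u0 y * kA x y.
have Ia : `]a - 1, a + 1[%classic a.
  by rewrite /= in_itv /=; apply/andP; split; lra.
have intf : forall x, `]a - 1, a + 1[%classic x -> mu.-integrable Rp (EFin \o f x).
  move=> x _.
  have hb : forall y, Rp y -> `|kA x y| <= Lc * gs (8 * t) (x + t) y +
      (Lc * expR (- x)) * gs (8 * t) (t - x) y.
    by move=> y _; apply: (le_trans (bA x y)); rewrite mulrDr mulrA.
  have [hi _] := @L2_mul R u0 (kA x) Lc (Lc * expR (- x)) (x + t) (t - x) (8 * t) 1
    hu0 (mA x) v0 L0 (mulr_ge0 L0 (expR_ge0 _)) ltr01 hb.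
  exact: hi.
have dfy : forall x y, is_derive x (1:R) (f ^~ y) (u0 y * kB x y).
  by move=> x y; exact: (is_derive_mulc (u0 y) (dA x y)).
have derf1 : forall x y, `]a - 1, a + 1[%classic x -> Rp y -> derivable (f ^~ y) x 1.
  by move=> x y _ _; exact: (@ex_derive _ _ _ _ _ _ _ (dfy x y)).
have pf : forall x y, partial1of2 f x y = u0 y * kB x y.
  by move=> x y; rewrite partial1of2E derive_val.
pose E := expR ((8 * t)^-1).
pose Hd := fun y => Lc * (E * gs (2 * (8 * t)) (a + t) y +
                         (expR (1 - a) * E) * gs (2 * (8 * t)) (t - a) y).
have Hd0 y : 0 <= Hd y.
  by rewrite /Hd mulr_ge0// addr_ge0// !mulr_ge0 ?expR_ge0 ?gs_ge0.
pose G := fun y => `|u0 y| * Hd y.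
have G0 y : 0 <= G y by rewrite mulr_ge0.
have v20 : 0 < 2 * (8 * t) by rewrite mulr_gt0.
have mHd : measurable_fun Rp Hd.
  apply: measurable_funM => //; apply: measurable_funD;
    apply: measurable_funM => //; exact: measurable_gs.
have intG : mu.-integrable Rp (EFin \o G).
  have hb : forall y, Rp y -> `|Hd y| <= Lc * E * gs (2 * (8 * t)) (a + t) y +
      (Lc * (expR (1 - a) * E)) * gs (2 * (8 * t)) (t - a) y.
    by move=> y _; rewrite ger0_norm// /Hd mulrDr !mulrA.
  have [hi _] := @L2_mul R u0 Hd (Lc * E) (Lc * (expR (1 - a) * E)) (a + t) (t - a)
    (2 * (8 * t)) 1 hu0 mHd v20 (mulr_ge0 L0 (expR_ge0 _))
    (mulr_ge0 L0 (mulr_ge0 (expR_ge0 _) (expR_ge0 _))) ltr01 hb.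
  have := integrable_norm hi.
  suff -> : (EFin \o (Num.Def.normr \o (fun y => u0 y * Hd y))) = EFin \o G by [].
  by apply: boolp.funext => y /=; rewrite /G normrM (ger0_norm (Hd0 y)).
have G_ub : forall x y, `]a - 1, a + 1[%classic x -> Rp y ->
    `|partial1of2 f x y| <= G y.
  move=> x y; rewrite /= in_itv /= => /andP[x1 x2] _.
  rewrite pf normrM /G ler_wpM2l//.
  apply: (le_trans (bB x y)); rewrite /Hd ler_wpM2l//.
  apply: lerD.
    apply: gs_dom => //; rewrite (_ : x + t - (a + t) = x - a); last by ring.
    rewrite ler_norml; apply/andP; split; lra.
  rewrite -mulrA; apply: ler_pM => //; first exact: expR_ge0.
    by rewrite ler_expR; lra.
  apply: gs_dom => //; rewrite (_ : t - x - (t - a) = a - x); last by ring.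
  rewrite ler_norml; apply/andP; split; lra.
have dd := @derivable_under_integral R _ _ mu f Rp mR _ _ _ Ia intf derf1 _ G0 intG G_ub.
have dv := @differentiation_under_integral R _ _ mu f Rp mR _ _ _ Ia intf derf1 _ G0 intG G_ub.
apply: DeriveDef; first exact: dd.
rewrite -derive1E dv.
by apply: eq_Rintegral => y _; rewrite pf.
Qed.

End Step.
Section Main.
Variable R : realType.
Local Notation mu := (@lebesgue_measure R).
Local Notation Rp := (@Rpos R).

Definition ct (t : R) := (Num.sqrt (4 * pi * t))^-1.
Definition FF (u0 : R -> R) (k : R -> R -> R -> R) (t x : R) :=
  \int[mu]_(y in Rp) (u0 y * k t x y).

Lemma heat_solE u0 t : heat_sol u0 t = fun x => ct t * FF u0 (@k0 R) t x.
Proof.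
apply: boolp.funext => x; rewrite /heat_sol /FF /ct; congr (_ * _).
apply: eq_Rintegral => y _; rewrite /k0 /ga.
have e1 : x + (t - y) = x - y + t by ring.
have e2 : x + (y - t) = x + y - t by ring.
by rewrite e1 e2.
Qed.

Lemma measurable_ga t (p : R -> R) : measurable_fun Rp p ->
  measurable_fun Rp (fun y => ga t (p y)).
Proof.
move=> mp; rewrite /ga; apply: measurableT_comp => //; apply: measurable_funM => //.
apply: measurableT_comp => //; exact: measurable_funX.
Qed.

Lemma measurable_ga1 t (p : R -> R) : measurable_fun Rp p ->
  measurable_fun Rp (fun y => ga1 t (p y)).
Proof.
move=> mp; rewrite /ga1; apply: measurable_funM; last exact: measurable_ga.
apply: measurableT_comp => //; apply: measurable_funM => //.
Qed.

Lemma measurable_ga2 t (p : R -> R) : measurable_fun Rp p ->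
  measurable_fun Rp (fun y => ga2 t (p y)).
Proof.
move=> mp; rewrite /ga2; apply: measurable_funM; last exact: measurable_ga.
apply: measurable_funB => //; apply: measurable_funM => //.
exact: measurable_funX.
Qed.

Lemma mp1 (x t : R) : measurable_fun Rp (fun y => x + (t - y)).
Proof. by apply: measurable_funD => //; apply: measurable_funB. Qed.

Lemma mp2 (x t : R) : measurable_fun Rp (fun y => x + (y - t)).
Proof. by apply: measurable_funD => //; apply: measurable_funB. Qed.

Lemma mk0 t x : measurable_fun Rp (@k0 R t x).
Proof.
rewrite /k0.
apply: measurable_funB; first (apply: measurable_ga; exact: mp1).
by apply: measurable_funM => //; (apply: measurable_ga; exact: mp2).
Qed.

Lemma mk1 t x : measurable_fun Rp (@k1 R t x).
Proof.
rewrite /k1.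
apply: measurable_funB; first (apply: measurable_ga1; exact: mp1).
apply: measurable_funM => //; apply: measurable_funB.
  (apply: measurable_ga1; exact: mp2).
(apply: measurable_ga; exact: mp2).
Qed.

Lemma mk2 t x : measurable_fun Rp (@k2 R t x).
Proof.
rewrite /k2.
apply: measurable_funB; first (apply: measurable_ga2; exact: mp1).
apply: measurable_funM => //; apply: measurable_funD.
  apply: measurable_funB; first (apply: measurable_ga2; exact: mp2).
  by apply: measurable_funM => //; (apply: measurable_ga1; exact: mp2).
(apply: measurable_ga; exact: mp2).
Qed.

End Main.
Section Bounds.
Variable R : realType.
Local Notation mu := (@lebesgue_measure R).
Local Notation Rp := (@Rpos R).

Lemma ct_gt0 (t : R) : 0 < t -> 0 < ct t.
Proof.
by move=> t0; rewrite /ct invr_gt0 sqrtr_gt0 mulr_gt0// mulr_gt0// pi_gt0.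
Qed.

Lemma bnd (u0 : R -> R) t x (kj : R -> R) : L2pos u0 -> 1 <= t -> 0 < x ->
  measurable_fun Rp kj ->
  (forall y, `|kj y| <= 4 * Bt t * (gs (8 * t) (x + t) y + expR (- x) * gs (8 * t) (t - x) y)) ->
  `|ct t * \int[mu]_(y in Rp) (u0 y * kj y)| <=
    Num.sqrt (ct t) * (\int[mu]_(y in Rp) (u0 y ^+ 2) / 2 + 512).
Proof.
move=> hu0 t1 x0 mk hk.
have t0 : 0 < t by lra.
have cc0 := ct_gt0 t0.
set sc := Num.sqrt (ct t).
have sc0 : 0 < sc by rewrite sqrtr_gt0.
set al := 4 * Bt t.
have B4 : Bt t <= 4.
  rewrite /Bt (_ : 4 = 1 + 3 :> R); last by [].
  rewrite lerD2l ler_pdivrMr// ler_peMr//.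
have B1 := Bt_ge1 t0.
have al0 : 0 <= al by rewrite /al mulr_ge0// (le_trans _ B1).
have al16 : al <= 16 by rewrite /al; lra.
set be := al * expR (- x).
have ex1 : expR (- x) <= 1 by rewrite expR_le1 oppr_le0 ltW.
have be0 : 0 <= be by rewrite /be mulr_ge0// expR_ge0.
have beal : be <= al by rewrite /be ler_piMr.
have v0 : 0 < 8 * t by rewrite mulr_gt0.
have hb : forall y, Rp y -> `|kj y| <= al * gs (8 * t) (x + t) y + be * gs (8 * t) (t - x) y.
  by move=> y _; apply: (le_trans (hk y)); rewrite /be /al mulrDr mulrA.
have si0 : 0 < sc^-1 by rewrite invr_gt0.
have [_ hI] := @L2_mul R u0 kj al be (x + t) (t - x) (8 * t) sc^-1 hu0 mk v0 al0 be0
   si0 hb.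
have eS : Num.sqrt (pi * (8 * t / 2)) = (ct t)^-1.
  by rewrite /ct invrK; congr (Num.sqrt _); field.
rewrite eS in hI.
rewrite normrM (ger0_norm (ltW cc0)).
apply: (le_trans (ler_wpM2l (ltW cc0) hI)).
have Q : al ^+ 2 + be ^+ 2 <= 512.
  have h1 : al ^+ 2 <= 256 by rewrite expr2; nra.
  have h2 : be ^+ 2 <= al ^+ 2 by rewrite !expr2; nra.
  lra.
have ccE : ct t = sc ^+ 2 by rewrite /sc sqr_sqrtr// ltW.
set A := \int[mu]_(y in Rp) u0 y ^+ 2.
have -> : ct t * (sc^-1 / 2 * A + (2 * sc^-1)^-1 * (2 * (al ^+ 2 + be ^+ 2) * (ct t)^-1)) =
  sc * (A / 2 + (al ^+ 2 + be ^+ 2)).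
  by rewrite ccE; field; rewrite lt0r_neq0.
by rewrite ler_wpM2l ?(ltW sc0)// lerD2l.
Qed.

Lemma supnorm_bd (f : R -> R) (b : R) : (forall x, 0 < x -> `|f x| <= b) ->
  (0 <= supnorm_pos f)%E /\ (supnorm_pos f <= b%:E)%E.
Proof.
move=> hb; split.
  apply: le_ereal_sup_tmp; exists (`|f 1|%:E); last by rewrite lee_fin normr_ge0.
  by exists 1 => //; rewrite /Rpos /= in_itv /= andbT ltr01.
apply: ge_ereal_sup => _ [x Rx <-]; rewrite lee_fin; apply: hb.
by move: Rx; rewrite /Rpos /= in_itv /= andbT.
Qed.

Lemma sqrt_ct_cvg : Num.sqrt (ct t) @[t --> +oo] --> (0 : R).
Proof.
apply/cvgrPdist_lt => e e0.
near=> t.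
rewrite sub0r normrN ger0_norm ?sqrtr_ge0//.
have t1 : 1 <= t by near: t; exact: (nbhs_pinfty_ge (num_real _)).
have tT : (e ^+ 4 * (4 * pi))^-1 < t by near: t; exact: (nbhs_pinfty_gt (num_real _)).
have t0 : 0 < t by lra.
have e4 : 0 < e ^+ 4 by rewrite exprn_gt0.
have p0 : 0 < 4 * pi :> R by rewrite mulr_gt0// pi_gt0.
rewrite -[e](@ger0_norm _ e) ?(ltW e0)// -sqrtr_sqr ltr_sqrt ?exprn_gt0//.
rewrite /ct -[e ^+ 2]invrK ltf_pV2 ?posrE ?sqrtr_gt0 ?invr_gt0 ?exprn_gt0 ?mulr_gt0//.
have ie : 0 <= (e ^+ 2)^-1 by rewrite invr_ge0 exprn_ge0// ltW.
rewrite -[(e ^+ 2)^-1](@ger0_norm _ _ ie) -sqrtr_sqr ltr_sqrt ?mulr_gt0//.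
have -> : ((e ^+ 2)^-1) ^+ 2 = (4 * pi) * (e ^+ 4 * (4 * pi))^-1.
  move: p0; move: (4 * pi) => P P0.
  by field; rewrite (lt0r_neq0 P0) (lt0r_neq0 e0).
by rewrite ltr_pM2l.
all: try exact: pi_gt0.
Unshelve. all: by end_near. Qed.

End Bounds.
Theorem lemma4p3 (R : realType) (u0 : R -> R) :
  H2pos u0 ->
  (forall t x : R, 0 < t -> 0 < x ->
     derivable (heat_sol u0 t) x 1 /\ derivable (derive1 (heat_sol u0 t)) x 1) /\
  (W2inf_norm_pos (heat_sol u0 t) @[t --> +oo] --> 0%E).
Proof.
move=> [g1 [g2 [hu0 _ _ _ _]]].
have L0 : forall t : R, 0 < t -> 0 <= 4 * Bt t.
  by move=> t t0; rewrite mulr_ge0// (le_trans _ (Bt_ge1 t0)).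
have D0 : forall t a : R, 0 < t ->
    is_derive a (1:R) (FF u0 (@k0 R) t) (FF u0 (@k1 R) t a).
  move=> t a t0.
  exact: (@deriv_step R u0 t (@k0 R t) (@k1 R t) (4 * Bt t) a hu0 t0 (L0 t t0)
    (mk0 t) (fun x y => der_k0 y x t0) (fun x y => k0_bd x y t0)
    (fun x y => k1_bd x y t0)).
have D1 : forall t a : R, 0 < t ->
    is_derive a (1:R) (FF u0 (@k1 R) t) (FF u0 (@k2 R) t a).
  move=> t a t0.
  exact: (@deriv_step R u0 t (@k1 R t) (@k2 R t) (4 * Bt t) a hu0 t0 (L0 t t0)
    (mk1 t) (fun x y => der_k1 y x t0) (fun x y => k1_bd x y t0)
    (fun x y => k2_bd x y t0)).
have H0 : forall t a : R, 0 < t ->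
    is_derive a (1:R) (heat_sol u0 t) (ct t * FF u0 (@k1 R) t a).
  by move=> t a t0; rewrite heat_solE; exact: (is_derive_mulc (ct t) (D0 t a t0)).
have DH1 : forall t : R, 0 < t ->
    derive1 (heat_sol u0 t) = (fun x => ct t * FF u0 (@k1 R) t x).
  move=> t t0; apply: boolp.funext => a; rewrite derive1E.
  by have [_ ->] := H0 t a t0.
have H1 : forall t a : R, 0 < t ->
    is_derive a (1:R) (derive1 (heat_sol u0 t)) (ct t * FF u0 (@k2 R) t a).
  by move=> t a t0; rewrite (DH1 t t0); exact: (is_derive_mulc (ct t) (D1 t a t0)).
have DH2 : forall t : R, 0 < t ->
    derive1 (derive1 (heat_sol u0 t)) = (fun x => ct t * FF u0 (@k2 R) t x).
  move=> t t0; apply: boolp.funext => a; rewrite derive1E.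
  by have [_ ->] := H1 t a t0.
split.
  move=> t x t0 _; split.
    by have [? _] := H0 t x t0.
  by have [? _] := H1 t x t0.
pose A := \int[lebesgue_measure]_(y in @Rpos R) u0 y ^+ 2.
pose K := A / 2 + 512.
have bd : forall t : R, 1 <= t ->
   (0 <= W2inf_norm_pos (heat_sol u0 t))%E /\
   (W2inf_norm_pos (heat_sol u0 t) <= (3 * (Num.sqrt (ct t) * K))%:E)%E.
  move=> t t1.
  have t0 : 0 < t by lra.
  have b0 : forall x, 0 < x -> `|heat_sol u0 t x| <= Num.sqrt (ct t) * K.
    move=> x x0; rewrite heat_solE.
    exact: (bnd hu0 t1 x0 (mk0 t x) (fun y => k0_bd x y t0)).
  have b1 : forall x, 0 < x -> `|derive1 (heat_sol u0 t) x| <= Num.sqrt (ct t) * K.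
    move=> x x0; rewrite (DH1 t t0).
    exact: (bnd hu0 t1 x0 (mk1 t x) (fun y => k1_bd x y t0)).
  have b2 : forall x, 0 < x ->
      `|derive1 (derive1 (heat_sol u0 t)) x| <= Num.sqrt (ct t) * K.
    move=> x x0; rewrite (DH2 t t0).
    exact: (bnd hu0 t1 x0 (mk2 t x) (fun y => k2_bd x y t0)).
  have [s00 s01] := supnorm_bd b0.
  have [s10 s11] := supnorm_bd b1.
  have [s20 s21] := supnorm_bd b2.
  rewrite /W2inf_norm_pos; split.
    by rewrite !adde_ge0.
  have -> : 3 * (Num.sqrt (ct t) * K) =
     Num.sqrt (ct t) * K + Num.sqrt (ct t) * K + Num.sqrt (ct t) * K by ring.
  by rewrite !EFinD; apply: leeD => //; apply: leeD.
apply: (squeeze_cvge (f := fun _ => 0%E)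
   (h := fun t => (3 * (Num.sqrt (ct t) * K))%:E)).
- near=> t.
  have t1 : 1 <= t by near: t; exact: (nbhs_pinfty_ge (num_real _)).
  by have [-> ->] := bd t t1.
- exact: cvg_cst.
- apply: cvg_EFin; first by near=> t.
  have e : (fine \o (fun t : R => (3 * (Num.sqrt (ct t) * K))%:E)) =
     (fun t : R => 3 * (Num.sqrt (ct t) * K)) by apply: boolp.funext.
  rewrite e.
  have h := cvgM (cvg_cst (3:R)) (cvgM (@sqrt_ct_cvg R) (cvg_cst K)).
  rewrite mul0r mulr0 in h.
  exact: h.
Unshelve. all: by end_near. Qed.
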